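(* Let $(A,C,k)$ be an instance with $n$ voters, let $f:\mathbb{N}\to\mathbb{R}$, let $t$ be a positive integer, and let $W$ be an $f$-representative committee with $\max_{c\in C\setminus W}|N_c| \ge t\frac{n}{k}$. Then the utilitarian ratio of $W$ is at least $\min\left(\frac12, \frac{f(t)}{2k}\right)$.
   Context: An instance $(A,C,k)$ consists of a finite nonempty candidate set $C$, voters $N=\{1,\dots,n\}$, approval sets $A_i\subseteq C$, and a committee size $1\le k\le |C|$. $N_c=\{i\in N: c\in A_i\}$. A committee is a set $W\subseteq C$ with $|W|\le k$. The utilitarian welfare is $\mathrm{sw}(W)=\sum_{i\in N}|A_i\cap W|$, and the utilitarian ratio of $W$ is $\mathrm{sw}(W)/\max\{\mathrm{sw}(W'): W'\subseteq C, |W'|=k\}$. A committee $W$ is $f$-representative if for every $c\in C\setminus W$, every $\ell\in\{1,\dots,k\}$, and every $N'\subseteq N_c$ with $|N'|\ge \ell\frac{n}{k}$, we have $\frac{1}{|N'|}\sum_{i\in N'}|A_i\cap W|\ge f(\ell)$. *)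

(* Defs.v *)
From mathcomp Require Import all_boot all_order all_algebra.
Set Implicit Arguments. Unset Strict Implicit. Unset Printing Implicit Defensive.
Import Order.TTheory GRing.Theory Num.Theory.
Local Open Scope ring_scope.

(* An instance: candidates form a finType C, voters are 'I_n,
   approval sets A : 'I_n -> {set C}, committee size k. *)

Definition supporters (C : finType) (n : nat) (A : 'I_n -> {set C}) (c : C)
  : {set 'I_n} := [set i | c \in A i].

Definition sw (C : finType) (n : nat) (A : 'I_n -> {set C}) (W : {set C}) : nat :=
  (\sum_(i < n) #|A i :&: W|)%N.

Definition max_sw (C : finType) (n : nat) (A : 'I_n -> {set C}) (k : nat) : nat :=
  (\max_(W' : {set C} | #|W'| == k) sw A W')%N.

Definition util_ratio (R : realFieldType) (C : finType) (n : nat)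
  (A : 'I_n -> {set C}) (k : nat) (W : {set C}) : R :=
  (sw A W)%:R / (max_sw A k)%:R.

Definition f_representative (R : realFieldType) (C : finType) (n : nat)
  (A : 'I_n -> {set C}) (k : nat) (f : nat -> R) (W : {set C}) : Prop :=
  forall c : C, c \notin W ->
  forall l : nat, (1 <= l <= k)%N ->
  forall N' : {set 'I_n}, N' \subset supporters A c ->
    ((#|N'|%:R : R) >= l%:R * (n%:R / k%:R)) ->
    (#|N'|%:R)^-1 * (\sum_(i in N') (#|A i :&: W|)%:R : R) >= f l.

(* Main.v *)
Require Import Defs.
From mathcomp Require Import all_boot all_order all_algebra.
From mathcomp Require Import ring lra.
Import Order.TTheory GRing.Theory Num.Theory.
Local Open Scope ring_scope.

Lemma dcount (C : finType) (n : nat) (A : 'I_n -> {set C}) (D : {set C}) :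
  (\sum_(i < n) #|A i :&: D| = \sum_(c in D) #|supporters A c|)%N.
Proof.
have h1 : forall i, #|A i :&: D| = (\sum_(c in D) (c \in A i))%N.
  move=> i; rewrite -sum1_card big_mkcond [RHS]big_mkcond /=.
  apply: eq_bigr => c _; rewrite inE; by case: (c \in A i); case: (c \in D).
have h2 : forall c, #|supporters A c| = (\sum_(i < n) (c \in A i))%N.
  move=> c; rewrite -sum1_card big_mkcond [RHS]big_mkcond /=.
  apply: eq_bigr => i _; rewrite inE; by case: (c \in A i).
rewrite (eq_bigr _ (fun i _ => h1 i)).
rewrite exchange_big /=; apply: eq_bigr => c _; by rewrite h2.
Qed.

Lemma ext_set (C : finType) (W : {set C}) (j : nat) :
  (#|W| + j <= #|C|)%N -> exists B : {set C}, W \subset B /\ #|B| = (#|W| + j)%N.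
Proof.
elim: j => [|j IH] h.
  by exists W; rewrite addn0.
have h' : (#|W| + j <= #|C|)%N by rewrite addnS in h; exact: ltnW h.
have [B [sWB cB]] := IH h'.
have : (0 < #|~: B|)%N.
  have := cardsC B; rewrite cB addnS in h *; move=> e; rewrite -e in h.
  by rewrite -(ltn_add2l (#|W| + j)) addn0.
case/card_gt0P => x; rewrite inE => xB.
exists (x |: B); split; first exact: (subset_trans sWB (subsetUr _ _)).
by rewrite cardsU1 xB cB addnS.
Qed.

Lemma sw_mono (C : finType) (n : nat) (A : 'I_n -> {set C}) (W B : {set C}) :
  W \subset B -> (sw A W <= sw A B)%N.
Proof.
move=> sWB; rewrite /sw; apply: leq_sum => i _; apply: subset_leq_card.
exact: setIS.
Qed.

Theorem lemma1 (R : realFieldType) (C : finType) (n : nat)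
  (A : 'I_n -> {set C}) (k : nat) (f : nat -> R) (t : nat) (W : {set C}) :
  (0 < n)%N ->
  (1 <= k)%N -> (k <= #|C|)%N ->
  (0 < t)%N ->
  (#|W| <= k)%N ->
  f_representative A k f W ->
  (((\max_(c : C | c \notin W) #|supporters A c|)%N)%:R : R) >= t%:R * (n%:R / k%:R) ->
  util_ratio R A k W >= Num.min (1 / 2) (f t / (2 * k%:R)).
Proof.
move=> n0 k1 kC t0 Wk frep hm.
set m := (\max_(c : C | c \notin W) #|supporters A c|)%N in hm.
have kR : (0 : R) < k%:R by rewrite ltr0n.
have nR : (0 : R) < n%:R by rewrite ltr0n.
have tR : (1 : R) <= t%:R by rewrite ler1n.
have tnk : (0 : R) < t%:R * (n%:R / k%:R).
  by apply: mulr_gt0; [lra | exact: divr_gt0].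
have mR : (0 : R) < m%:R by apply: lt_le_trans hm.
have [cs csW csm] : {c | c \in [pred c | c \notin W] & m = #|supporters A c|}.
  apply: eq_bigmax_cond; apply/card_gt0P.
  case: (pickP [pred c | c \notin W]) => [c hc|h0]; first by exists c.
  exfalso; move: mR; rewrite /m big_pred0 // ltxx //.
rewrite inE in csW.
have mn : (m <= n)%N.
  by rewrite csm; apply: leq_trans (max_card _) _; rewrite card_ord.
have tk : (1 <= t <= k)%N.
  rewrite t0 /=; rewrite -(ler_nat R).
  have : t%:R * (n%:R / k%:R) <= (n%:R : R) by apply: le_trans hm _; rewrite ler_nat.
  move=> h.
  have e : t%:R * (n%:R / k%:R) * k%:R = t%:R * (n%:R : R).
    by field; rewrite pnatr_eq0 -lt0n.
  have h2 : t%:R * (n%:R : R) <= n%:R * k%:R.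
    by rewrite -e; rewrite ler_pM2r //.
  nra.
have fr := frep cs csW t tk (supporters A cs) (subxx _) (ltac:(by rewrite -csm)).
rewrite -csm -natr_sum in fr.
set S := (\sum_(i in supporters A cs) #|A i :&: W|)%N in fr.
have Ssw : (S <= sw A W)%N.
  rewrite /S /sw [X in (_ <= X)%N](bigID (fun i => i \in supporters A cs)) /=.
  exact: leq_addr.
have upper : (max_sw A k <= sw A W + k * m)%N.
  apply/bigmax_leqP => W' /eqP cW'.
  rewrite /sw.
  apply: (@leq_trans (\sum_(i < n) (#|A i :&: W| + #|A i :&: (W' :\: W)|))%N).
    apply: leq_sum => i _.
    apply: leq_trans (_ : #|(A i :&: W) :|: (A i :&: (W' :\: W))| <= _)%N.
      apply: subset_leq_card; rewrite -setIUr; apply: setIS.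
      apply/subsetP => x; rewrite !inE; by case: (x \in W); case: (x \in W').
    by rewrite cardsU leq_subr.
  rewrite big_split /= leq_add2l dcount.
  apply: (@leq_trans (\sum_(c in W' :\: W) m)%N).
    apply: leq_sum => c; rewrite inE => /andP [cW _].
    by rewrite /m; apply: (leq_bigmax_cond (P := fun c => c \notin W)); exact: cW.
  rewrite sum_nat_const leq_mul2r; apply/orP; right.
  by rewrite -cW'; apply: subset_leq_card; apply: subsetDl.
have lower : (sw A W <= max_sw A k)%N.
  have hj : (#|W| + (k - #|W|) <= #|C|)%N by rewrite subnKC.
  have [B [sWB cB]] := @ext_set _ _ _ hj.
  rewrite subnKC // in cB.
  apply: leq_trans (@sw_mono _ _ A _ _ sWB) _.
  rewrite /max_sw; apply: (leq_bigmax_cond (P := fun W1 : {set C} => #|W1| == k)); by rewrite cB.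
rewrite /util_ratio.
set s := sw A W in Ssw upper lower *.
set M := max_sw A k in upper lower *.
have sM : (s%:R : R) <= M%:R by rewrite ler_nat.
have Mup : (M%:R : R) <= s%:R + k%:R * m%:R by rewrite -natrM -natrD ler_nat.
have SsR : (S%:R : R) <= s%:R by rewrite ler_nat.
have fS : f t * m%:R <= S%:R.
  by rewrite mulrC -ler_pdivlMl.
have s0 : (0 : R) <= s%:R by [].
rewrite ge_min; apply/orP.
case: (lerP (f t) 0) => hf.
  right; apply: (@le_trans _ _ 0).
    by rewrite ler_pdivrMr ?mul0r //; lra.
  by apply: divr_ge0.
have spos : (0 : R) < s%:R by nra.
have Mpos : (0 : R) < M%:R by lra.
case: (lerP (f t) k%:R) => hfk.
  right; rewrite ler_pdivlMr // mulrAC ler_pdivrMr; last by lra.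
  nra.
left; rewrite ler_pdivlMr //; nra.
Qed.
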